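(* Let $(G,k,M^*,M)$ be a critical tuple. Then $G_M$ contains no target set, i.e., there is no set $\mathcal{C}$ of directed cycles of $G_M$, each with $w_M(C)\le 0$, such that (a) every $e\in E^+(C^+)$ is contained in some cycle of $\mathcal{C}$; (b) for every $C\in\mathcal{C}$, $C\cap C^+$ is a single path; (c) every $e\in E^-(G_M)$ is contained in at most two cycles of $\mathcal{C}$.
   Context: $R(H)$ is the set of red edges of an edge set $H$. For a perfect matching $M$ of a red/blue edge-colored bipartite graph $G=(A\sqcup B,E)$, $G_M$ is the directed graph on $A\sqcup B$ with edges of $M$ oriented from $A$ to $B$ and other edges from $B$ to $A$, weighted by $w_M(e)=0$ for blue $e$, $-1$ for red $e\in M$, $+1$ for red $e\notin M$; for a subgraph $H$, $E^+(H)$ (resp. $E^-(H)$) is the set of red edges of $H$ not in $M$ (resp. in $M$), and $w_M(H)=|E^+(H)|-|E^-(H)|$. Cycles are identified with edge sets. For an edge $e$, $M^e$ is a perfect matching containing $e$ with the minimum number of red edges among those containing $e$. A tuple $(G,k,M^*,M)$ ($G$ red/blue bipartite, $k\ge0$ integer, $M^*,M$ perfect matchings) is critical if: every edge of $G$ lies in some perfect matching; $|R(M^* )|=k$; $|R(M)|<\frac13k$; every directed cycle $C$ of $G_M$ with $w_M(C)>0$ has $|E^+(C)|>\frac23k$; and $|R(M^e)|<\frac13k$ for every red $e\in M^*\setminus M$. For a critical tuple, $C^+$ denotes the unique directed cycle of $G_M$ contained in $M\Delta M^*$ with $w_M(C^+)>0$. *)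

(* Defs.v *)
From mathcomp Require Import all_boot all_order all_algebra.
Set Implicit Arguments. Unset Strict Implicit. Unset Printing Implicit Defensive.
Import GRing.Theory Num.Theory.

Section Defs.
Variables (A B : finType).
Implicit Types (E red M N H C P : {set A * B}).

(* G = (A ⊔ B, E) simple bipartite graph; an edge is a pair (a,b) in E.
   The red edges are those in [red]; all other edges are blue. *)

Definition R red H : {set A * B} := H :&: red.

Definition perfect_matching E N : Prop :=
  [/\ N \subset E,
      forall a : A, #|[set e in N | e.1 == a]| = 1
    & forall b : B, #|[set e in N | e.2 == b]| = 1].

Definition Eplus red M H : {set A * B} := (H :&: red) :\: M.
Definition Eminus red M H : {set A * B} := H :&: red :&: M.

Definition wM red M H : int := (#|Eplus red M H|%:Z - #|Eminus red M H|%:Z)%R.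

Definition arc E M : rel (A + B) := fun u v =>
  match u, v with
  | inl a, inr b => (a, b) \in M
  | inr b, inl a => ((a, b) \in E) && ((a, b) \notin M)
  | _, _ => false
  end.

Definition edge_of (u v : A + B) : option (A * B) :=
  match u, v with
  | inl a, inr b => Some (a, b)
  | inr b, inl a => Some (a, b)
  | _, _ => None
  end.

Definition cycle_edges (s : seq (A + B)) : {set A * B} :=
  [set e | has (fun x => edge_of x (next s x) == Some e) s].

Definition path_edges (x : A + B) (s : seq (A + B)) : {set A * B} :=
  [set e | has (fun p => edge_of p.1 p.2 == Some e) (zip (x :: s) s)].

Definition dicycle E M C : Prop :=
  exists s : seq (A + B),
    [/\ uniq s, 2 <= size s, cycle (arc E M) s & C = cycle_edges s].

Definition dipath E M P : Prop :=
  exists (x : A + B) (s : seq (A + B)),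
    [/\ uniq (x :: s), path (arc E M) x s & P = path_edges x s].

(* N is a possible choice of M^e: a perfect matching containing e with the
   minimum number of red edges among perfect matchings containing e *)
Definition is_Me E red (e : A * B) N : Prop :=
  [/\ perfect_matching E N, e \in N &
      forall N', perfect_matching E N' -> e \in N' -> #|R red N| <= #|R red N'|].

Definition critical E red (k : nat) (Mstar M : {set A * B}) : Prop :=
  [/\ perfect_matching E Mstar /\ perfect_matching E M,
      forall e, e \in E -> exists N, perfect_matching E N /\ e \in N,
      #|R red Mstar| = k,
      3 * #|R red M| < k /\
      (forall C, dicycle E M C -> (0 < wM red M C)%R -> 2 * k < 3 * #|Eplus red M C|)
    & forall e, e \in R red (Mstar :\: M) ->
        forall N, is_Me E red e N -> 3 * #|R red N| < k].

Definition target_set E red M (Cplus : {set A * B}) (Cs : {set {set A * B}}) : Prop :=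
  [/\ forall C, C \in Cs -> dicycle E M C /\ (wM red M C <= 0)%R,
      forall e, e \in Eplus red M Cplus -> exists2 C, C \in Cs & e \in C,
      forall C, C \in Cs -> dipath E M (C :&: Cplus)
    & forall e, e \in Eminus red M E -> #|[set C in Cs | e \in C]| <= 2].

End Defs.

(* Main.v *)
Require Import Defs.
From mathcomp Require Import all_boot all_order all_algebra.
From mathcomp Require Import zify.

Lemma dcount (T : finType) (F : {set T}) (Cs : {set {set T}}) :
  \sum_(e in F) #|[set C in Cs | e \in C]| = \sum_(C in Cs) #|F :&: C|.
Proof.
have h1 : forall (X : {set T}) (P : pred T), #|[set x in X | P x]| = \sum_(x in X) (P x : nat).
  move=> X P; rewrite -sum1_card big_mkcond [RHS]big_mkcond /=.
  by apply: eq_bigr => x _; rewrite inE; case: (x \in X); case: (P x).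
have h2 : forall (X : {set {set T}}) (P : pred {set T}), #|[set x in X | P x]| = \sum_(x in X) (P x : nat).
  move=> X P; rewrite -sum1_card big_mkcond [RHS]big_mkcond /=.
  by apply: eq_bigr => x _; rewrite inE; case: (x \in X); case: (P x).
under eq_bigr => e _ do rewrite h2.
rewrite exchange_big /=; apply: eq_bigr => C _.
rewrite (_ : F :&: C = [set x in F | x \in C]) ?h1 //; by apply/setP => x; rewrite !inE.
Qed.

Theorem lemma3 (A B : finType) (E red : {set A * B}) (k : nat)
  (Mstar M : {set A * B}) :
  critical E red k Mstar M ->
  forall Cplus : {set A * B},
    dicycle E M Cplus ->
    Cplus \subset (M :\: Mstar) :|: (Mstar :\: M) ->
    (0 < wM red M Cplus)%R ->
    ~ (exists Cs : {set {set A * B}}, target_set E red M Cplus Cs).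
Proof.
move=> [[pmS pmM] _ _ [hM hcyc] _] Cplus dC _ wpos [Cs [h1 h2 h3 h4]].
have hk := hcyc Cplus dC wpos.
have [ME _ _] := pmM.
set S := Eplus red M Cplus.
set EmE := Eminus red M E.
have a1 : #|S| <= \sum_(e in S) #|[set C in Cs | e \in C]|.
  rewrite -sum1_card; apply: leq_sum => e eS.
  have [C CC eC] := h2 e eS.
  by rewrite card_gt0; apply/set0Pn; exists C; rewrite inE CC eC.
have a2 : \sum_(C in Cs) #|S :&: C| <= \sum_(C in Cs) #|Eplus red M C|.
  apply: leq_sum => C _; apply: subset_leq_card; apply/subsetP => e.
  by rewrite /S /Eplus !inE => /andP [/andP [-> /andP [_ ->]] ->].
have a3 : \sum_(C in Cs) #|Eplus red M C| <= \sum_(C in Cs) #|Eminus red M C|.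
  apply: leq_sum => C CC; have [_ w] := h1 C CC.
  by move: w; rewrite /wM Num.Theory.subr_le0 lez_nat.
have a4 : \sum_(C in Cs) #|Eminus red M C| = \sum_(C in Cs) #|EmE :&: C|.
  apply: eq_bigr => C _; apply: eq_card => e; rewrite /EmE /Eminus !inE.
  case eM: (e \in M); last by rewrite !andbF andFb.
  by rewrite (subsetP ME e eM); case: (e \in C); case: (e \in red).
have a5 : \sum_(e in EmE) #|[set C in Cs | e \in C]| <= #|EmE| * 2.
  by rewrite -sum_nat_const; apply: leq_sum => e eE; apply: h4.
have a6 : #|EmE| <= #|R red M|.
  apply: subset_leq_card; apply/subsetP => e.
  by rewrite /EmE /Eminus /R !inE => /andP [/andP [_ ->] ->].
rewrite dcount in a1; rewrite -dcount in a4.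
fold S in hk. lia.
Qed.
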